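(* Let $\gamma$ be a POS for which there is a constant $c>0$ such that for every cylinder set $A$ there exists a time box $\Lambda$ with $A\in\mathcal F_{S\setminus\Lambda_+}$ and $\gamma_\Lambda(A,\omega)\ge c\,\gamma_\Lambda(A,\xi)$ for all $\omega,\xi\in\Omega$. Then $|\mathcal G(\gamma)|\le1$.
   Context: $(S,\le)$ is a countable partially ordered set. For $x\in S$ write $x_-=\{y\in S:y<x\}$, $x_+=\{y\in S:y>x\}$. For $\Upsilon\subset S$: $\max(\Upsilon)=\{x\in\Upsilon: y\notin\Upsilon\text{ for all }y>x\}$, $\min(\Upsilon)=\{x\in\Upsilon: y\notin\Upsilon\text{ for all }y<x\}$, the past $\Upsilon_-=\{x\in S\setminus\Upsilon:\exists y\in\Upsilon,\ x<y\}$, the future $\Upsilon_+=\{x\in S\setminus\Upsilon:\exists y\in\Upsilon,\ x>y\}$, and the outer time $\Upsilon^*=\{x\in S: x\text{ is comparable with no }y\in\Upsilon\}$. Standing assumptions: for every $x\in S$, $\max(x_-)$ and $\min(x_+)$ are finite, every $y<x$ satisfies $y\le y_0<x$ for some $y_0\in\max(x_-)$, every $z>x$ satisfies $z\ge z_0>x$ for some $z_0\in\min(x_+)$; and $S$ has no minimal element. A finite set $\Lambda\subset S$ is a time box if $\Lambda_-\cap\Lambda_+=\emptyset$. $(E,\mathcal E)$ is a measurable space, $\Omega=E^S$ with product $\sigma$-algebra $\mathcal F$; $\mathcal F_\Upsilon$ is generated by coordinates in $\Upsilon$; a cylinder set is an element of $\mathcal F_\Delta$ for some finite $\Delta$. A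 proper oriented kernel on a time box $\Lambda$ is a map $\gamma_\Lambda:\mathcal F_{S\setminus\Lambda_+}\times\Omega\to[0,1]$ such that (a) $\gamma_\Lambda(\cdot,\omega)$ is a probability measure; (b) $\gamma_\Lambda(A,\cdot)$ is $\mathcal F_{\Lambda_-\cup\Lambda^*}$-measurable for $A\in\mathcal F_{S\setminus\Lambda_+}$; (c) $\gamma_\Lambda(A,\cdot)$ is $\mathcal F_{\Lambda_-}$-measurable for $A\in\mathcal F_\Lambda$; (d) $\gamma_\Lambda(B,\omega)=\mathbf 1_B(\omega)$ for $B\in\mathcal F_{\Lambda_-\cup\Lambda^*}$. Compositions $(\gamma_\Delta\gamma_\Lambda)(f\mid\omega)=\int\gamma_\Lambda(f\mid\sigma)\gamma_\Delta(d\sigma,\omega)$, $(\mu\gamma_\Lambda)(f)=\int\gamma_\Lambda(f\mid\sigma)\mu(d\sigma)$ with $\gamma_\Lambda(f\mid\omega)=\int f\,d\gamma_\Lambda(\cdot,\omega)$. A POS is a family $\gamma=(\gamma_\Lambda)$ of proper oriented kernels indexed by all time boxes with $\gamma_\Delta\gamma_\Lambda=\gamma_\Delta$ on $\mathcal F_{S\setminus\Lambda_+}$ whenever $\Lambda\subset\Delta$. $\mathcal G(\gamma)$ is the set of probability measures $\mu$ with $\mu\gamma_\Lambda=\mu$ on $\mathcal F_{S\setminus\Lambda_+}$ for all time boxes $\Lambda$. *)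

(* Defs.v *)
From HB Require Import structures.
From mathcomp Require Import all_boot all_order all_algebra.
From mathcomp Require Import all_classical all_reals all_analysis measurable_realfun.
Set Implicit Arguments. Unset Strict Implicit. Unset Printing Implicit Defensive.
Import Order.TTheory GRing.Theory Num.Theory.
Local Open Scope classical_set_scope.
Local Open Scope ring_scope.

Section Poset.
Variables (S : Type) (le : S -> S -> Prop).

Definition lt (x y : S) : Prop := le x y /\ x <> y.

Definition xminus (x : S) : set S := [set y | lt y x].
Definition xplus (x : S) : set S := [set y | lt x y].

Definition maxs (U : set S) : set S := [set x | U x /\ forall y, lt x y -> ~ U y].
Definition mins (U : set S) : set S := [set x | U x /\ forall y, lt y x -> ~ U y].

Definition past (U : set S) : set S := [set x | ~ U x /\ exists y, U y /\ lt x y].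
Definition future (U : set S) : set S := [set x | ~ U x /\ exists y, U y /\ lt y x].
Definition outer (U : set S) : set S :=
  [set x | forall y, U y -> ~ (le x y \/ le y x)].

Record standing_poset : Prop := {
  sp_refl : forall x, le x x;
  sp_antisym : forall x y, le x y -> le y x -> x = y;
  sp_trans : forall x y z, le x y -> le y z -> le x z;
  sp_countable : exists f : S -> nat, injective f;
  sp_max_fin : forall x, finite_set (maxs (xminus x));
  sp_min_fin : forall x, finite_set (mins (xplus x));
  sp_max_cover : forall x y, lt y x -> exists2 y0, maxs (xminus x) y0 & le y y0;
  sp_min_cover : forall x z, lt x z -> exists2 z0, mins (xplus x) z0 & le z0 z;
  sp_no_min : forall x, exists y, lt y x }.

Definition time_box (L : set S) : Prop :=
  finite_set L /\ past L `&` future L = set0.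

End Poset.

Section Config.
Variables (S : Type) (d : measure_display) (E : measurableType d).

Definition cylgen (U : set S) : set (set (S -> E)) :=
  [set A | exists x B, U x /\ measurable B /\ A = (fun w : S -> E => w x) @^-1` B].

Definition FU (U : set S) (A : set (S -> E)) : Prop := <<s cylgen U >> A.

Definition cylinder (A : set (S -> E)) : Prop :=
  exists D : set S, finite_set D /\ FU D A.

End Config.
Arguments cylgen {S d} E U.
Arguments FU {S d} E U A.
Arguments cylinder {S d} E A.

Notation OmegaU E U := (g_sigma_algebraType (@cylgen _ _ E U)).

Section Kernels.
Variables (S : Type) (le : S -> S -> Prop) (d : measure_display)
  (E : measurableType d) (R : realType).

Definition FU_measurable (U : set S) (f : (S -> E) -> \bar R) : Prop :=
  @measurable_fun _ _ (OmegaU E U) _ setT f.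

(* A family of kernels: for each L, omega, a probability measure on F_{S \ L_+} *)
Definition kernel_family :=
  forall (L : set S), (S -> E) -> probability (OmegaU E (~` future le L)) R.

Definition proper_oriented (g : kernel_family) (L : set S) : Prop :=
  (forall A, FU E (~` future le L) A ->
     FU_measurable (past le L `|` outer le L) (fun w => g L w A)) /\
  (forall A, FU E L A -> FU_measurable (past le L) (fun w => g L w A)) /\
  (forall B, FU E (past le L `|` outer le L) B ->
     forall w, g L w B = ((\1_B w : R))%:E).

(* POS: proper oriented kernels on time boxes, consistent
   (gamma_D gamma_L = gamma_D where both sides are defined) *)
Definition POS (g : kernel_family) : Prop :=
  (forall L, time_box le L -> proper_oriented g L) /\
  (forall L D, time_box le L -> time_box le D -> L `<=` D ->
     forall A, FU E (~` future le L) A -> FU E (~` future le D) A ->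
     forall w, (\int[g D w]_s g L s A)%E = g D w A).

Definition Gibbs (g : kernel_family) (mu : probability (OmegaU E setT) R) : Prop :=
  forall L, time_box le L -> forall A, FU E (~` future le L) A ->
    (\int[mu]_s g L s A)%E = mu A.

End Kernels.
Arguments FU_measurable {S d} E R U f.
Arguments kernel_family {S} le {d} E R.
Arguments proper_oriented {S le d E R} g L.
Arguments POS {S le d E R} g.
Arguments Gibbs {S le d E R} g mu.

(* Main.v *)
Require Import Defs.
From HB Require Import structures.
From mathcomp Require Import all_boot all_order all_algebra.
From mathcomp Require Import all_classical all_reals all_analysis measurable_realfun.
From mathcomp Require Import ring lra.
Import Order.TTheory GRing.Theory Num.Theory.
Import numFieldNormedType.Exports.
Local Open Scope classical_set_scope.
Local Open Scope ring_scope.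
Section ext.
Context d (T : measurableType d) (R : realType).
Local Open Scope ereal_scope.

Lemma ext_le (mu nu : probability T R) (c : R) (Rr : set (set T)) :
  (0 <= c)%R -> setring Rr ->
  (forall A, Rr A -> measurable A /\ c%:E * nu A <= mu A) ->
  forall A, <<sr Rr>> A -> c%:E * nu A <= mu A.
Proof.
move=> c0 rR HR A HA.
suff : [set A | measurable A /\ c%:E * nu A <= mu A] A by case.
apply: (monotone_setring_sub_g_sigma_ring _ rR HR HA); split.
- move=> F ndF GF; have mF i : measurable (F i) by case: (GF i).
  have mU : measurable (\bigcup_i F i) by exact: bigcupT_measurable.
  split => //.
  apply: (@lee_cvg_to _ \oo _ _ (fun n => c%:E * nu (F n)) (fun n => mu (F n))).
  + apply: cvgeZl => //. exact: (nondecreasing_cvg_mu (mu:=nu) mF mU ndF).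
  + exact: (nondecreasing_cvg_mu (mu:=mu) mF mU ndF).
  + by apply: nearW => n; case: (GF n).
- move=> F niF GF; have mF i : measurable (F i) by case: (GF i).
  have mU : measurable (\bigcap_i F i) by exact: bigcapT_measurable.
  split => //.
  apply: (@lee_cvg_to _ \oo _ _ (fun n => c%:E * nu (F n)) (fun n => mu (F n))).
  + apply: cvgeZl => //; apply: (nonincreasing_cvg_mu (mu:=nu)) => //.
    by rewrite (le_lt_trans (probability_le1 _ (mF 0%N))) ?ltry.
  + apply: (nonincreasing_cvg_mu (mu:=mu)) => //.
    by rewrite (le_lt_trans (probability_le1 _ (mF 0%N))) ?ltry.
  + by apply: nearW => n; case: (GF n).
Qed.
End ext.
Section rho.
Context d (T : measurableType d) (R : realType).
Local Open Scope ereal_scope.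
Variables (mu nu : probability T R) (c : R).
Hypotheses (c0 : (0 < c)%R) (c1 : (c < 1)%R)
  (hge : forall A, measurable A -> c%:E * nu A <= mu A).

Definition rho_ch := crestr0 (cscale (1 - c)^-1
   (cadd (charge_of_finite_measure mu) (cscale (- c) (charge_of_finite_measure nu))))
   (@measurableT _ T).

Lemma rho_chE A : measurable A ->
  rho_ch A = ((1 - c)^-1)%:E * (mu A - c%:E * nu A).
Proof.
move=> mA; rewrite /rho_ch /crestr0 mem_set // /crestr setIT /cscale /cadd /=.
by rewrite /charge_of_finite_measure; unfold cadd; simpl; rewrite /cscale EFinN mulNe.
Qed.

Lemma rho_ge0 A : 0 <= rho_ch A.
Proof.
have [mA|nA] := pselect (measurable A); last first.
  by rewrite /rho_ch /crestr0 memNset.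
rewrite rho_chE //.
apply: mule_ge0; first by rewrite lee_fin invr_ge0 subr_ge0 ltW.
by rewrite subre_ge0 ?hge // fin_num_measure.
Qed.

Definition rho := measure_of_charge rho_ch rho_ge0.
HB.instance Definition _ := Measure.on rho.

Lemma rhoE A : measurable A -> rho A = ((1 - c)^-1)%:E * (mu A - c%:E * nu A).
Proof. exact: rho_chE. Qed.

Lemma rhoT : rho setT = 1.
Proof.
rewrite rhoE // !probability_setT mule1 -EFinB -EFinM mulVf //.
by rewrite subr_eq0 gt_eqF.
Qed.

HB.instance Definition _ := Measure_isProbability.Build _ _ _ rho rhoT.

Definition rhoP : probability T R := rho.

Lemma rho_decomp B : measurable B ->
  mu B = ((1 - c)%:E * rho B) + c%:E * nu B.
Proof.
move=> mB; rewrite rhoE // muleA -EFinM mulfV ?subr_eq0 ?gt_eqF // mul1e.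
by rewrite subeK // fin_numM // fin_num_measure.
Qed.

Lemma rho_int (f : T -> \bar R) (A : set T) : measurable A ->
  measurable_fun setT f -> (forall x, 0 <= f x) ->
  \int[mu]_x f x = mu A -> \int[nu]_x f x = nu A -> \int[rho]_x f x = rho A.
Proof.
move=> mA mf f0 hmu hnu.
have k1 : (0 <= 1 - c)%R by rewrite subr_ge0 ltW.
pose m := measure_add (mscale (NngNum k1) rho) (mscale (NngNum (ltW c0)) nu).
have em : \int[mu]_x f x = \int[m]_x f x.
  apply: eq_measure_integral => B mB _.
  apply: (eq_trans (rho_decomp _ mB)); exact/esym/(measure_addE (mscale (NngNum k1) rho) (mscale (NngNum (ltW c0)) nu) B).
rewrite em ge0_integral_measure_add // !ge0_integral_mscale //= hnu in hmu.
rewrite rho_decomp // in hmu.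
have fin : (c%:E * nu A) \is a fin_num by rewrite fin_numM // fin_num_measure.
have := congr1 (fun x => ((1 - c)^-1)%:E * (x - c%:E * nu A)) hmu => /=.
by rewrite !addeK // !muleA -!EFinM mulVf ?subr_eq0 ?gt_eqF // !mul1e.
Qed.
End rho.
Section trans.
Context (S : Type) (d : measure_display) (E : measurableType d) (R : realType).

Lemma FU_mono {U V : set S} {A} : U `<=` V -> FU E U A -> FU E V A.
Proof.
move=> UV; apply: sub_sigma_algebra2 => B [x [C [Ux [mC ->]]]].
by exists x, C; split => //; apply: UV.
Qed.

Lemma FUm_T U (f : (S -> E) -> \bar R) :
  FU_measurable E R U f -> measurable_fun (T := OmegaU E setT) setT f.
Proof.
move=> hf _ B mB; apply: (@FU_mono U setT) => //.
exact: (hf measurableT B mB).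
Qed.

Lemma cyl_ring : setring (@cylinder S _ E).
Proof.
split.
- exists set0; split => //; exact: (@measurable0 _ (OmegaU E set0)).
- move=> A B [D1 [fD1 h1]] [D2 [fD2 h2]]; exists (D1 `|` D2); split.
    by rewrite finite_setU.
  apply: (@measurableU _ (OmegaU E (D1 `|` D2))).
    exact: (FU_mono (@subsetUl _ D1 D2) h1).
  exact: (FU_mono (@subsetUr _ D1 D2) h2).
- move=> A B [D1 [fD1 h1]] [D2 [fD2 h2]]; exists (D1 `|` D2); split.
    by rewrite finite_setU.
  apply: (@measurableD _ (OmegaU E (D1 `|` D2))).
    exact: (FU_mono (@subsetUl _ D1 D2) h1).
  exact: (FU_mono (@subsetUr _ D1 D2) h2).
Qed.

Lemma cyl_meas A : @cylinder S _ E A -> FU E setT A.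
Proof. by move=> [D [_ h]]; apply: (FU_mono _ h). Qed.

Lemma meas_cyl A : FU E setT A -> <<sr @cylinder S _ E>> A.
Proof.
have cT : @cylinder S _ E setT.
  by exists set0; split => //; exact: (@measurableT _ (OmegaU E set0)).
have [s0 sD sU] := smallest_sigma_ring (@cylinder S _ E).
apply: smallest_sub.
  split => //.
    move=> B hB; apply: sD => //.
    by move=> F [_ GF]; exact: GF.
move=> B [x [C [_ [mC ->]]]] F [_ GF]; apply: GF.
exists [set x]; split; first exact: finite_set1.
by apply: sub_sigma_algebra; exists x, C.
Qed.

End trans.
Lemma step_arith (R : realType) (c q : R) (x y : \bar R) :
  (c < 1)%R -> x \is a fin_num -> y \is a fin_num ->
  (x <= y + q%:E)%E -> ((1 - c)%:E * x + c%:E * y <= y + ((1 - c) * q)%:E)%E.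
Proof.
move=> c1; case: x => // x _; case: y => // y _.
rewrite -!EFinM -!EFinD !lee_fin => h.
have k : (0 <= 1 - c)%R by rewrite subr_ge0 ltW.
have h' := ler_wpM2l k h.
apply: le_trans (_ : (1 - c) * (y + q) + c * y <= _)%R.
  by rewrite lerD2r.
by rewrite le_eqVlt; apply/orP; left; apply/eqP; ring.
Qed.
Theorem mainTheorem11 (S : Type) (le : S -> S -> Prop)
  (d : measure_display) (E : measurableType d) (R : realType)
  (g : kernel_family le E R) :
  standing_poset le ->
  POS g ->
  (exists c : R, 0 < c /\
     forall A : set (S -> E), cylinder E A ->
       exists L : set S, time_box le L /\ FU E (~` future le L) A /\
         forall w xi : S -> E, (c%:E * g L xi A <= g L w A)%E) ->
  forall mu nu : probability (OmegaU E setT) R,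
    Gibbs g mu -> Gibbs g nu ->
    forall A : set (S -> E), FU E setT A -> mu A = nu A.
Proof.
move=> _ [hprop _] [c0 [c0pos hc0]].
pose c := Num.min c0 (1/2).
have cpos : 0 < c by rewrite lt_min c0pos /= divr_gt0.
have c1 : c < 1.
  have h2 : (1 / 2 : R) < 1 by rewrite ltr_pdivrMr // mul1r ltr1n.
  by rewrite (le_lt_trans _ h2) // ge_min lexx orbT.
have hc A : cylinder E A -> exists L : set S, time_box le L /\
   FU E (~` future le L) A /\ forall w xi, (c%:E * g L xi A <= g L w A)%E.
  move=> /hc0 [L [tb [FA h]]]; exists L; split => //; split => // w xi.
  apply: le_trans (h w xi); apply: lee_wpmul2r => //.
  by rewrite lee_fin ge_min lexx.
have mfg L B : time_box le L -> FU E (~` future le L) B ->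
    measurable_fun (T := OmegaU E setT) setT (fun s => g L s B).
  by move=> tb FB; apply: (@FUm_T S d E R (past le L `|` outer le L)); exact: ((hprop L tb).1 B FB).
have key (m n : probability (OmegaU E setT) R) : Gibbs g m -> Gibbs g n ->
    forall A, measurable A -> (c%:E * n A <= m A)%E.
  move=> gm gn A mA.
  apply: (@ext_le _ _ _ m n c (@cylinder S _ E) (ltW cpos) (@cyl_ring S d E)).
    move=> B cB; split; first exact: cyl_meas.
    have [L [tb [FB hB]]] := hc B cB.
    have FBT : FU E setT B := @FU_mono S d E _ _ _ (@subsetT _ _) FB.
    have lb xi : (c%:E * g L xi B <= m B)%E.
      rewrite -(gm L tb B FB).
      rewrite -[X in (X <= _)%E]mule1 -(probability_setT m) -integral_cst //.
      apply: ge0_le_integral => //.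
      - by move=> x _; apply: mule_ge0; [rewrite lee_fin ltW | apply: measure_ge0].
      - exact: (mfg L B tb FB).
      - by move=> x _; exact: hB.
    have mf := mfg L B tb FB.
    rewrite -(gn L tb B FB) -ge0_integralZl //; last first.
      by rewrite lee_fin ltW.
    rewrite -[X in (_ <= X)%E]mule1 -(probability_setT n) -integral_cst //.
    apply: ge0_le_integral => //.
    - by move=> x _; apply: mule_ge0; [rewrite lee_fin ltW | apply: measure_ge0].
    - apply: measurable_funeM; exact: (mfg L B tb FB).
  exact: meas_cyl.
have ind n : forall m1 m2 : probability (OmegaU E setT) R, Gibbs g m1 -> Gibbs g m2 ->
    forall A, measurable A -> (m1 A <= m2 A + ((1 - c) ^+ n)%:E)%E.
  elim: n => [|n IH] m1 m2 g1 g2 A mA.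
    rewrite expr0; apply: le_trans (probability_le1 _ mA) _.
    by rewrite lee_paddl.
  have hge := key m1 m2 g1 g2.
  pose r := @rhoP _ _ _ m1 m2 c c1 hge.
  have gr : Gibbs g r.
    move=> L tb B FB.
    have FBT : FU E setT B := @FU_mono S d E _ _ _ (@subsetT _ _) FB.
    apply: (@rho_int _ _ _ m1 m2 c cpos c1 hge).
    - exact: FBT.
    - exact: (mfg L B tb FB).
    - by move=> x; exact: measure_ge0.
    - exact: (g1 L tb B FB).
    - exact: (g2 L tb B FB).
  have := IH r m2 gr g2 A mA.
  rewrite (@rho_decomp _ _ _ m1 m2 c c1 hge A mA) => h.
  rewrite exprS; apply: step_arith => //; exact: fin_num_measure.
move=> mu nu gmu gnu A mA.
have hle m1 m2 : Gibbs g m1 -> Gibbs g m2 -> (m1 A <= m2 A)%E.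
  move=> g1 g2.
  have f1 : m1 A \is a fin_num by exact: fin_num_measure.
  have f2 : m2 A \is a fin_num by exact: fin_num_measure.
  rewrite -(fineK f1) -(fineK f2) lee_fin.
  apply: (@ler_cvg_to _ \oo _ _ (fun _ => fine (m1 A))
     (fun n => fine (m2 A) + (1 - c) ^+ n)).
  - exact: cvg_cst.
  - rewrite -[X in _ --> X]addr0; apply: cvgD; first exact: cvg_cst.
    apply: cvg_expr.
    by rewrite ger0_norm ?subr_ge0 ?ltW // ltrBlDr ltrDl.
  - apply: nearW => k; have := ind k m1 m2 g1 g2 A mA.
    by rewrite -(fineK f1) -(fineK f2) -EFinD lee_fin.
by apply: le_anti; rewrite !hle.
Qed.
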